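(* Let $\mathbb{K}$ be a non-Archimedean valued field, $G$ a normed $\mathbb{K}$-amenable totally disconnected locally compact group, and $E$ a dual normed $\mathbb{K}[G]$-module. Then $H^n_{lucb}(G, E) = 0$ for all $n \geq 1$.
   Context: A non-Archimedean valued field is a field with an absolute value satisfying the ultrametric inequality. A normed $\mathbb{K}$-vector space has a norm with $\|x\|=0$ iff $x=0$, $\|x+y\|\le\max\{\|x\|,\|y\|\}$, $\|\alpha x\|=|\alpha|_\mathbb{K}\|x\|$. A normed $\mathbb{K}[G]$-module is a normed $\mathbb{K}$-vector space with an action of $G$ by linear isometries (no continuity assumed). Duals carry the operator norm $\|T\|_{op}=\inf\{C\ge0:|Tx|_\mathbb{K}\le C\|x\|\}$ and the dual action $(g\cdot\lambda)(x)=\lambda(g^{-1}x)$; a dual normed $\mathbb{K}[G]$-module is one isometrically $G$-isomorphic to the dual of a normed $\mathbb{K}[G]$-module. A map $f:G^{n+1}\to E$ is left uniformly continuous if for every $\varepsilon>0$ there is a neighbourhood $U$ of the identity in $G^{n+1}$ with $\|f(x)-f(ux)\|<\varepsilon$ for all $x\in G^{n+1}$, $u\in U$. $LUC^n_b(G,E)$ is the space of bounded left uniformly continuous maps $G^{n+1}\to E$, with action $(g\cdot f)(g_0,\dots,g_n)=g\cdot f(g^{-1}g_0,\dots,g^{-1}g_n)$ and coboundary $\delta^nf(g_0,\dots,g_{n+1})=\sum_{i=0}^{n+1}(-1)^if(g_0,\dots,\widehat{g_i},\dots,g_{n+1})$; $H^\bullet_{lucb}(G,E)$ is the cohomology of the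 complex of $G$-invariants $LUC^\bullet_b(G,E)^G$. $C_b(G,\mathbb{K})$: continuous bounded functions $G\to\mathbb{K}$ with sup norm, $(g\cdot f)(x)=f(g^{-1}x)$. $G$ is normed $\mathbb{K}$-amenable if there exists a bounded linear map $m:C_b(G,\mathbb{K})\to\mathbb{K}$ with $m(\mathbbm{1}_G)=1$ and $m(g\cdot f)=m(f)$ for all $g,f$. *)

(* Defs.v *)
From HB Require Import structures.
From mathcomp Require Import all_boot all_order all_algebra.
From mathcomp Require Import all_classical all_reals all_analysis.
From mathcomp Require Import monoid.

Set Implicit Arguments.
Unset Strict Implicit.
Unset Printing Implicit Defensive.

Import Order.TTheory GRing.Theory Num.Theory.
Local Open Scope classical_set_scope.
Local Open Scope ring_scope.

(* A (possibly non-commutative) group carrying a topology; the compatibility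
   axioms (continuity of multiplication and inversion) are the predicate
   [topological_group] below. *)
#[short(type="topGroupType")]
HB.structure Definition TopGroup := {G of Group G & Topological G}.

Definition topological_group (G : topGroupType) : Prop :=
  continuous (fun p : G * G => (p.1 * p.2)%g) /\
  continuous (fun x : G => (x^-1)%g).

Definition nonarch_abs (R : realType) (K : fieldType) (abs : K -> R) : Prop :=
  [/\ forall x, 0 <= abs x,
      forall x, abs x = 0 <-> x = 0,
      forall x y, abs (x * y) = abs x * abs y &
      forall x y, abs (x + y) <= Num.max (abs x) (abs y)].

Definition normed_space (R : realType) (K : fieldType) (abs : K -> R)
    (V : lmodType K) (nV : V -> R) : Prop :=
  [/\ forall x, nV x = 0 <-> x = 0,
      forall x y, nV (x + y) <= Num.max (nV x) (nV y) &
      forall (a : K) x, nV (a *: x) = abs a * nV x].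

Definition normed_module (R : realType) (K : fieldType) (abs : K -> R)
    (G : topGroupType) (V : lmodType K) (nV : V -> R) (act : G -> V -> V) : Prop :=
  [/\ normed_space abs nV,
      forall x, act 1%g x = x,
      forall g h x, act (g * h)%g x = act g (act h x),
      forall g (a : K) x y, act g (a *: x + y) = a *: act g x + act g y &
      forall g x, nV (act g x) = nV x].

Definition lin_functional (K : fieldType) (V : lmodType K) (l : V -> K) : Prop :=
  forall (a : K) x y, l (a *: x + y) = a * l x + l y.

Definition bounded_functional (R : realType) (K : fieldType) (abs : K -> R)
    (V : lmodType K) (nV : V -> R) (l : V -> K) : Prop :=
  exists C : R, forall x, abs (l x) <= C * nV x.

Definition opnorm (R : realType) (K : fieldType) (abs : K -> R)
    (V : lmodType K) (nV : V -> R) (l : V -> K) : R :=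
  inf [set C : R | 0 <= C /\ forall x, abs (l x) <= C * nV x].

(* E is a dual normed K[G]-module: there is a normed K[G]-module V and an
   isometric G-equivariant linear isomorphism Phi from E onto the dual of V
   (bounded linear functionals on V, operator norm, dual action). *)
Definition dual_normed_module (R : realType) (K : fieldType) (abs : K -> R)
    (G : topGroupType) (E : lmodType K) (nE : E -> R) (actE : G -> E -> E) : Prop :=
  exists (V : lmodType K) (nV : V -> R) (actV : G -> V -> V) (Phi : E -> V -> K),
    normed_module abs nV actV /\
    (forall e, lin_functional (Phi e) /\ bounded_functional abs nV (Phi e)) /\
    (forall (a : K) e e', Phi (a *: e + e') = (fun x => a * Phi e x + Phi e' x)) /\
    injective Phi /\
    (forall l : V -> K, lin_functional l -> bounded_functional abs nV l ->
       exists e, Phi e = l) /\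
    (forall e, nE e = opnorm abs nV (Phi e)) /\
    (forall g e, Phi (actE g e) = (fun x => Phi e (actV (g^-1)%g x))).

Definition cont_K (R : realType) (K : fieldType) (abs : K -> R)
    (G : topGroupType) (f : G -> K) : Prop :=
  forall (x : G) (eps : R), 0 < eps ->
    exists U : set G, nbhs x U /\ forall y, U y -> abs (f y - f x) < eps.

Definition Cb (R : realType) (K : fieldType) (abs : K -> R)
    (G : topGroupType) (f : G -> K) : Prop :=
  cont_K abs f /\ exists B : R, forall x, abs (f x) <= B.

Definition supnorm (R : realType) (K : fieldType) (abs : K -> R)
    (G : topGroupType) (f : G -> K) : R :=
  sup (range (fun x => abs (f x))).

(* G is normed K-amenable: a bounded linear map m : C_b(G,K) -> K with
   m(1_G) = 1 and m(g . f) = m(f), where (g . f)(x) = f(g^-1 x).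
   (m is given as a total map; only its values on C_b(G,K) matter.) *)
Definition normed_amenable (R : realType) (K : fieldType) (abs : K -> R)
    (G : topGroupType) : Prop :=
  exists m : (G -> K) -> K,
    [/\ forall (a : K) f h, Cb abs f -> Cb abs h ->
          m (fun x => a * f x + h x) = a * m f + m h,
        exists C : R, forall f, Cb abs f -> abs (m f) <= C * supnorm abs f,
        m (fun _ => 1) = 1 &
        forall (g : G) f, Cb abs f -> m (fun x => f (g^-1 * x)%g) = m f].

(* LUC^n_b(G,E): maps G^{n+1} -> E (G^{n+1} = 'I_n.+1 -> G) that are bounded
   and left uniformly continuous; neighbourhoods of the identity of G^{n+1}
   are taken for the product topology (they contain a product of
   neighbourhoods of 1 in G). *)
Definition lucb (R : realType) (K : fieldType) (G : topGroupType)
    (E : lmodType K) (nE : E -> R) (n : nat) (f : ('I_n.+1 -> G) -> E) : Prop :=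
  (exists M : R, forall x, nE (f x) <= M) /\
  forall eps : R, 0 < eps ->
    exists U : 'I_n.+1 -> set G, (forall i, nbhs (1%g : G) (U i)) /\
      forall (x u : 'I_n.+1 -> G), (forall i, U i (u i)) ->
        nE (f x - f (fun i => (u i * x i)%g)) < eps.

(* G-invariance for (g . f)(g_0..g_n) = g . f(g^-1 g_0, ..., g^-1 g_n). *)
Definition G_invariant (K : fieldType) (G : topGroupType) (E : lmodType K)
    (act : G -> E -> E) (n : nat) (f : ('I_n.+1 -> G) -> E) : Prop :=
  forall (g : G) x, act g (f (fun i => (g^-1 * x i)%g)) = f x.

Definition coboundary (K : fieldType) (G : topGroupType) (E : lmodType K)
    (n : nat) (f : ('I_n.+1 -> G) -> E) : ('I_n.+2 -> G) -> E :=
  fun x => \sum_(i < n.+2) ((-1) ^+ i : K) *: f (fun j => x (lift i j)).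

(* H^{m+1}_lucb(G, E) = 0: every G-invariant LUC-bounded (m+1)-cocycle is the
   coboundary of a G-invariant LUC-bounded m-cochain. *)
Definition Hlucb_succ_vanishes (R : realType) (K : fieldType) (G : topGroupType)
    (E : lmodType K) (nE : E -> R) (act : G -> E -> E) (m : nat) : Prop :=
  forall f : ('I_m.+2 -> G) -> E,
    lucb nE f -> G_invariant act f -> coboundary f = (fun _ => 0) ->
    exists h : ('I_m.+1 -> G) -> E,
      [/\ lucb nE h, G_invariant act h & coboundary h = f].

(* Main.v *)
Require Import Defs.
From HB Require Import structures.
From mathcomp Require Import all_boot all_order all_algebra.
From mathcomp Require Import all_classical all_reals all_analysis.
From mathcomp Require Import monoid zify.

Set Implicit Arguments.
Unset Strict Implicit.
Unset Printing Implicit Defensive.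
Import Order.TTheory GRing.Theory Num.Theory.
Local Open Scope classical_set_scope.
Local Open Scope ring_scope.

Lemma abs0 (R : realType) (K : fieldType) (abs : K -> R) :
  nonarch_abs abs -> abs 0 = 0.
Proof. by case=> _ H _ _; apply/H. Qed.

Lemma abs1 (R : realType) (K : fieldType) (abs : K -> R) :
  nonarch_abs abs -> abs 1 = 1.
Proof.
move=> [H0 H1 HM _]. have h := HM 1 1. rewrite mulr1 in h.
have hn : abs 1 != 0 by apply/eqP => /H1 /eqP; rewrite oner_eq0.
by apply: (mulfI hn); rewrite mulr1 -h.
Qed.

Lemma absN (R : realType) (K : fieldType) (abs : K -> R) :
  nonarch_abs abs -> forall x, abs (- x) = abs x.
Proof.
move=> Ha; have [H0 H1 HM _] := Ha.
have h1 : abs (-1) = 1.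
  have := HM (-1) (-1); rewrite mulrNN mulr1 (abs1 Ha) => /esym/eqP.
  rewrite -expr2 sqrf_eq1 => /orP [/eqP //|/eqP h].
  by have := H0 (-1); rewrite h ler0N1.
by move=> x; rewrite -mulN1r HM h1 mul1r.
Qed.

Lemma abs_sub (R : realType) (K : fieldType) (abs : K -> R) :
  nonarch_abs abs -> forall x y, abs (x - y) <= Num.max (abs x) (abs y).
Proof. move=> Ha x y; have [_ _ _ U] := Ha; by rewrite -(absN Ha y) U. Qed.

Lemma abs_addle (R : realType) (K : fieldType) (abs : K -> R) :
  nonarch_abs abs -> forall x y, abs (x + y) <= abs x + abs y.
Proof.
move=> Ha x y; have [H0 _ _ U] := Ha; apply: le_trans (U x y) _.
by rewrite ge_max lerDl lerDr !H0.
Qed.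

Lemma nV_ge0 (R : realType) (K : fieldType) (abs : K -> R) (V : lmodType K) (nV : V -> R) :
  nonarch_abs abs -> normed_space abs nV -> forall x, 0 <= nV x.
Proof.
move=> Ha [N0 NU NZ] x.
have : nV (x + (-1) *: x) <= Num.max (nV x) (nV ((-1) *: x)) by apply: NU.
rewrite NZ (absN Ha) (abs1 Ha) mul1r maxxx scaleN1r subrr.
by have [h _] := N0 0; rewrite (proj2 (N0 0) erefl).
Qed.

Lemma opnorm_le (R : realType) (K : fieldType) (abs : K -> R) (V : lmodType K) (nV : V -> R)
  (l : V -> K) (C : R) : 0 <= C -> (forall x, abs (l x) <= C * nV x) -> opnorm abs nV l <= C.
Proof.
move=> C0 HC; apply: (ge_inf (E := [set C : R | 0 <= C /\ forall x, abs (l x) <= C * nV x])).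
  by exists 0 => y [].
by split.
Qed.

Lemma opnorm_bound (R : realType) (K : fieldType) (abs : K -> R) (V : lmodType K) (nV : V -> R)
  (l : V -> K) : nonarch_abs abs -> normed_space abs nV -> bounded_functional abs nV l ->
  forall x, abs (l x) <= opnorm abs nV l * nV x.
Proof.
move=> Ha Hn [C HC] x.
have nge0 := nV_ge0 Ha Hn.
have [H0 _ _ _] := Ha.
have [nx0|nxp] := eqVneq (nV x) 0.
  by have := HC x; rewrite nx0 !mulr0.
have nxp' : 0 < nV x by rewrite lt_def nxp nge0.
rewrite -ler_pdivrMr //.
apply: lb_le_inf.
  exists (Num.max C 0); split; first by rewrite le_max lexx orbT.
  move=> y; apply: le_trans (HC y) _; apply: ler_wpM2r => //.
  by rewrite le_max lexx.
by move=> D [D0 HD]; rewrite ler_pdivrMr.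
Qed.

Lemma small_mul (R : realType) (A d eps : R) : 0 <= A -> 0 <= d -> d < eps / (A + 1) -> A * d < eps.
Proof.
move=> A0 d0 h.
have A1 : 0 < A + 1 by rewrite ltr_wpDl.
rewrite ltr_pdivlMr // in h.
apply: le_lt_trans h; rewrite mulrC ler_wpM2l //.
by rewrite lerDl.
Qed.

Lemma eps_div_gt0 (R : realType) (A eps : R) : 0 <= A -> 0 < eps -> 0 < eps / (A + 1).
Proof. by move=> A0 e0; rewrite divr_gt0 // ltr_wpDl. Qed.

Lemma Phi0 (K : fieldType) (E V : lmodType K) (Phi : E -> V -> K) :
  (forall (a : K) e e', Phi (a *: e + e') = (fun x => a * Phi e x + Phi e' x)) ->
  forall x, Phi 0 x = 0.
Proof.
move=> H x; have := H (-1) 0 0; rewrite scaler0 addr0 => ->.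
by rewrite mulN1r addNr.
Qed.

Lemma PhiB (K : fieldType) (E V : lmodType K) (Phi : E -> V -> K) :
  (forall (a : K) e e', Phi (a *: e + e') = (fun x => a * Phi e x + Phi e' x)) ->
  forall e e' x, Phi (e - e') x = Phi e x - Phi e' x.
Proof.
move=> H e e' x; rewrite -[e - e']addrC -scaleN1r H.
by rewrite mulN1r addrC.
Qed.

Lemma Phisum (K : fieldType) (E V : lmodType K) (Phi : E -> V -> K) :
  (forall (a : K) e e', Phi (a *: e + e') = (fun x => a * Phi e x + Phi e' x)) ->
  forall k (c : 'I_k -> K) (e : 'I_k -> E) x,
  Phi (\sum_(i < k) c i *: e i) x = \sum_(i < k) c i * Phi (e i) x.
Proof.
move=> H; elim=> [|k IH] c e x; first by rewrite !big_ord0 (Phi0 H).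
rewrite !big_ord_recl H IH //.
Qed.

Lemma Cb0 (R : realType) (K : fieldType) (abs : K -> R) (G : topGroupType) :
  nonarch_abs abs -> Cb abs (fun _ : G => 0).
Proof.
move=> Ha; split; last by exists 0 => x; rewrite (abs0 Ha).
move=> x eps e0; exists setT; split; first exact: filterT.
by move=> y _; rewrite subrr (abs0 Ha).
Qed.

Lemma Cbconst (R : realType) (K : fieldType) (abs : K -> R) (G : topGroupType) (c : K) :
  nonarch_abs abs -> Cb abs (fun _ : G => c).
Proof.
move=> Ha; split; last by exists (abs c) => x.
move=> x eps e0; exists setT; split; first exact: filterT.
by move=> y _; rewrite subrr (abs0 Ha).
Qed.

Lemma Cb_lin (R : realType) (K : fieldType) (abs : K -> R) (G : topGroupType) (a : K) (f h : G -> K) :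
  nonarch_abs abs -> Cb abs f -> Cb abs h -> Cb abs (fun x => a * f x + h x).
Proof.
move=> Ha [cf [Bf HBf]] [ch [Bh HBh]]; have [H0 _ HM U] := Ha; split.
  move=> x eps e0.
  have [U1 [N1 H1]] := cf x (eps / (abs a + 1)) (eps_div_gt0 (H0 a) e0).
  have [U2 [N2 H2]] := ch x eps e0.
  exists (U1 `&` U2); split; first exact: filterI.
  move=> y [y1 y2].
  have -> : a * f y + h y - (a * f x + h x) = a * (f y - f x) + (h y - h x).
    by rewrite mulrBr; rewrite opprD !addrA; congr (_ + _); rewrite addrAC.
  apply: le_lt_trans (U _ _) _; rewrite gt_max HM (H2 _ y2) andbT.
  by apply: small_mul => //; apply: H1.
exists (Num.max (abs a * Bf) Bh) => x.
apply: le_trans (U _ _) _; rewrite HM.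
apply: le_max2 => //; exact: ler_wpM2l.
Qed.


Lemma m0 (R : realType) (K : fieldType) (abs : K -> R) (G : topGroupType) (m : (G -> K) -> K) :
  nonarch_abs abs ->
  (forall (a : K) f h, Cb abs f -> Cb abs h -> m (fun x => a * f x + h x) = a * m f + m h) ->
  m (fun _ => 0) = 0.
Proof.
move=> Ha Hm; have := Hm (-1) _ _ (Cb0 G Ha) (Cb0 G Ha).
by rewrite mulr0 addr0 mulN1r addNr.
Qed.

Lemma mconst (R : realType) (K : fieldType) (abs : K -> R) (G : topGroupType) (m : (G -> K) -> K) :
  nonarch_abs abs ->
  (forall (a : K) f h, Cb abs f -> Cb abs h -> m (fun x => a * f x + h x) = a * m f + m h) ->
  m (fun _ => 1) = 1 -> forall c, m (fun _ => c) = c.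
Proof.
move=> Ha Hm H1 c; have := Hm c _ _ (Cbconst G 1 Ha) (Cb0 G Ha).
by rewrite mulr1 addr0 H1 (m0 Ha Hm) mulr1 addr0.
Qed.

Lemma msub (R : realType) (K : fieldType) (abs : K -> R) (G : topGroupType) (m : (G -> K) -> K) :
  nonarch_abs abs ->
  (forall (a : K) f h, Cb abs f -> Cb abs h -> m (fun x => a * f x + h x) = a * m f + m h) ->
  forall f h, Cb abs f -> Cb abs h -> m (fun x => f x - h x) = m f - m h.
Proof.
move=> Ha Hm f h cf ch; have := Hm (-1) _ _ ch cf.
rewrite mulN1r addrC => <-; congr m; apply: funext => x.
by rewrite mulN1r addrC.
Qed.

Lemma mm_sum (R : realType) (K : fieldType) (abs : K -> R) (G : topGroupType) (m : (G -> K) -> K) :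
  nonarch_abs abs ->
  (forall (a : K) f h, Cb abs f -> Cb abs h -> m (fun x => a * f x + h x) = a * m f + m h) ->
  forall k (c : 'I_k -> K) (F : 'I_k -> G -> K), (forall i, Cb abs (F i)) ->
  Cb abs (fun g => \sum_(i < k) c i * F i g) /\
  m (fun g => \sum_(i < k) c i * F i g) = \sum_(i < k) c i * m (F i).
Proof.
move=> Ha Hm; elim=> [|k IH] c F HF.
  have -> : (fun g : G => \sum_(i < 0) c i * F i g) = (fun _ => 0).
    by apply: funext => g; rewrite big_ord0.
  by rewrite big_ord0; split; [exact: Cb0 | exact: (m0 Ha Hm)].
have [cb me] := IH (fun i => c (lift ord0 i)) (fun i => F (lift ord0 i)) (fun i => HF _).
have -> : (fun g => \sum_(i < k.+1) c i * F i g) =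
  (fun g => c ord0 * F ord0 g + \sum_(i < k) c (lift ord0 i) * F (lift ord0 i) g).
  by apply: funext => g; rewrite big_ord_recl.
split; first exact: Cb_lin.
by rewrite Hm // me big_ord_recl.
Qed.

Definition gcons (T : Type) n (g : T) (z : 'I_n -> T) : 'I_n.+1 -> T :=
  fun i => if unlift ord0 i is Some j then z j else g.

Lemma gcons0 (T : Type) n (g : T) (z : 'I_n -> T) : gcons g z ord0 = g.
Proof. by rewrite /gcons unlift_none. Qed.

Lemma gconsS (T : Type) n (g : T) (z : 'I_n -> T) j : gcons g z (lift ord0 j) = z j.
Proof. by rewrite /gcons liftK. Qed.

Lemma gcons_lift0 (T : Type) n (g : T) (z : 'I_n -> T) :
  (fun j => gcons g z (lift ord0 j)) = z.
Proof. by apply: funext => j; rewrite gconsS. Qed.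

Lemma gcons_liftS (T : Type) n (g : T) (y : 'I_n.+1 -> T) (k : 'I_n.+1) :
  (fun j : 'I_n.+1 => gcons g y (lift (lift ord0 k) j)) = gcons g (fun j : 'I_n => y (lift k j)).
Proof.
apply: funext => j; case: (unliftP ord0 j) => [j' ->|->].
  have -> : lift (lift ord0 k) (lift ord0 j') = lift ord0 (lift k j').
    apply/val_inj; rewrite /= /bump /= !add1n ltnS; by case: (k <= j')%N.
  by rewrite !gconsS.
have -> : lift (lift ord0 k) ord0 = ord0 :> 'I_n.+2 by apply/val_inj.
by rewrite !gcons0.
Qed.

Lemma gcons_map2 (T : Type) n (op : T -> T -> T) a b (c d : 'I_n -> T) :
  (fun i => op (gcons a c i) (gcons b d i)) = gcons (op a b) (fun i => op (c i) (d i)).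
Proof. by apply: funext => i; rewrite /gcons; case: (unlift ord0 i). Qed.

Lemma gcons_map1 (T : Type) n (op : T -> T) a (c : 'I_n -> T) :
  (fun i => op (gcons a c i)) = gcons (op a) (fun i => op (c i)).
Proof. by apply: funext => i; rewrite /gcons; case: (unlift ord0 i). Qed.

Lemma rmul_nbhs (G : topGroupType) : topological_group G ->
  forall (x : G) (A : set G), nbhs (1%g : G) A -> nbhs x [set y | A (y * x^-1)%g].
Proof.
move=> [Hmul _] x A HA.
have cf : (fun y : G => (y * x^-1)%g) @ x --> (x * x^-1)%g.
  apply: (cvg_comp (fun y : G => (y, x^-1)%g) (fun p : G * G => (p.1 * p.2)%g)); last exact: (Hmul (x, x^-1)%g).
  apply: cvg_pair; [exact: cvg_id | exact: cvg_cst].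
rewrite mulgV in cf.
exact: cf _ HA.
Qed.

Lemma supnorm_le (R : realType) (K : fieldType) (abs : K -> R) (G : topGroupType) (phi : G -> K) (B : R) :
  nonarch_abs abs -> (forall g, abs (phi g) <= B) -> 0 <= supnorm abs phi <= B.
Proof.
move=> [H0 _ _ _] HB; apply/andP; split.
  apply: le_trans (H0 (phi 1%g)) _; apply: sup_upper_bound.
    by split; [exists (abs (phi 1%g)); exists 1%g | exists B => _ [g _ <-]].
  by exists 1%g.
apply: ge_sup; first by exists (abs (phi 1%g)); exists 1%g.
by move=> _ [g _ <-].
Qed.

Lemma mbound (R : realType) (K : fieldType) (abs : K -> R) (G : topGroupType) (m : (G -> K) -> K) (C : R) :
  nonarch_abs abs ->
  (forall f, Cb abs f -> abs (m f) <= C * supnorm abs f) ->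
  forall phi B, Cb abs phi -> (forall g, abs (phi g) <= B) -> abs (m phi) <= Num.max C 0 * B.
Proof.
move=> Ha HC phi B cphi HB.
have /andP [s0 sB] := supnorm_le Ha HB.
apply: le_trans (HC _ cphi) _.
apply: le_trans (_ : Num.max C 0 * supnorm abs phi <= _).
  by apply: ler_wpM2r => //; rewrite le_max lexx.
by apply: ler_wpM2l => //; rewrite le_max lexx orbT.
Qed.

Lemma small_mul2 (R : realType) (A eps : R) : 0 <= A -> 0 < eps -> A * (eps / (A + 1)) < eps.
Proof.
move=> A0 e0; have A1 : 0 < A + 1 by rewrite ltr_wpDl.
rewrite mulrA ltr_pdivrMr // mulrDr mulr1 mulrC ltrDl //.
Qed.

Lemma main (R : realType) (K : fieldType) (abs : K -> R)
    (G : topGroupType) (E : lmodType K) (nE : E -> R) (actE : G -> E -> E) (m : nat) :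
  nonarch_abs abs -> topological_group G -> normed_amenable abs G ->
  normed_module abs nE actE -> dual_normed_module abs nE actE ->
  Hlucb_succ_vanishes nE actE m.
Proof.
move=> Ha Htop [mm [Hm [C HC] H1 Hmi]] [HnE _ _ _ _]
  [V [nV [actV [Phi [[HnV _ _ _ _] [HPhi [Hlin [Hinj [Hsurj [Hnorm HactPhi]]]]]]]]]].
move=> f [[M HM] Hluc] Hfinv Hcoc.
have [H0 _ HMul _] := Ha.
have nEge0 := nV_ge0 Ha HnE.
have nVge0 := nV_ge0 Ha HnV.
pose C' := Num.max C 0; pose M' := Num.max M 0.
have C'0 : 0 <= C' by rewrite le_max lexx orbT.
have M'0 : 0 <= M' by rewrite le_max lexx orbT.
have HM' : forall x, nE (f x) <= M' by move=> x; apply: le_trans (HM x) _; rewrite le_max lexx.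
have KB : forall e v, abs (Phi e v) <= nE e * nV v.
  by move=> e v; rewrite Hnorm; apply: opnorm_bound => //; exact: (proj2 (HPhi e)).
have absB : forall a b : K, abs (a - b) = abs (b - a).
  by move=> a b; rewrite -opprB (absN Ha).
pose phi (z : 'I_m.+1 -> G) (v : V) := fun g : G => Phi (f (gcons g z)) v.
have Cbphi : forall z v, Cb abs (phi z v).
  move=> z v; split; last first.
    exists (M' * nV v) => g; apply: le_trans (KB _ _) _; exact: ler_wpM2r.
  move=> x eps e0.
  have [U [HU HfU]] := Hluc _ (eps_div_gt0 (nVge0 v) e0).
  exists [set y | U ord0 (y * x^-1)%g]; split; first exact: rmul_nbhs.
  move=> y Uy.
  have := HfU (gcons x z) (gcons (y * x^-1)%g (fun _ => 1%g)).
  rewrite (gcons_map2 (fun a b => (a * b)%g)) /= mulgVK.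
  have -> : (fun i => (1 * z i)%g) = z by apply: funext => i; rewrite mul1g.
  move=> /(_ _)/wrap[].
    move=> i; case: (unliftP ord0 i) => [j ->|->]; rewrite ?gconsS ?gcons0 //.
    exact: nbhs_singleton.
  move=> Hd; rewrite /phi absB -(PhiB Hlin).
  apply: le_lt_trans (KB _ _) _; rewrite mulrC; apply: small_mul => //.
have Cbsub : forall p q : G -> K, Cb abs p -> Cb abs q -> Cb abs (fun g => p g - q g).
  move=> p q cp cq.
  have -> : (fun g => p g - q g) = (fun g => -1 * q g + p g).
    by apply: funext => g; rewrite mulN1r addrC.
  exact: Cb_lin.
pose L z v := mm (phi z v).
have Lbound : forall z v, abs (L z v) <= (C' * M') * nV v.
  move=> z v; rewrite -mulrA; apply: (mbound Ha HC) => // g.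
  apply: le_trans (KB _ _) _; exact: ler_wpM2r.
have Llin : forall z, lin_functional (L z).
  move=> z a x y; rewrite /L -Hm //.
  congr mm; apply: funext => g; rewrite /phi.
  exact: (proj1 (HPhi _)).
have : forall z, exists e, Phi e = L z.
  move=> z; apply: Hsurj => //; exists (C' * M'); exact: Lbound.
case/choice => h Hh.
have CM0 : 0 <= C' * M' by rewrite mulr_ge0.
exists h; split.
- split.
    exists (C' * M') => z; rewrite Hnorm Hh; exact: opnorm_le.
  move=> eps e0.
  have [U [HU HfU]] := Hluc _ (eps_div_gt0 C'0 e0).
  exists (fun i => U (lift ord0 i)); split; first by move=> i; exact: HU.
  move=> x u Hu.
  rewrite Hnorm.
  have -> : Phi (h x - h (fun i => (u i * x i)%g)) = (fun v => L x v - L (fun i => (u i * x i)%g) v).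
    by apply: funext => v; rewrite (PhiB Hlin) !Hh.
  apply: le_lt_trans (small_mul2 C'0 e0).
  apply: opnorm_le; first by rewrite mulr_ge0 // ltW // eps_div_gt0.
  move=> v; rewrite /L -(msub Ha Hm) // -mulrA.
  apply: (mbound Ha HC); first exact: Cbsub.
  move=> g; rewrite /phi -(PhiB Hlin).
  apply: le_trans (KB _ _) _; apply: ler_wpM2r => //; apply: ltW.
  have := HfU (gcons g x) (gcons 1%g u).
  rewrite (gcons_map2 (fun a b => (a * b)%g)) /= mul1g; apply.
  move=> i; case: (unliftP ord0 i) => [j ->|->]; rewrite ?gconsS ?gcons0 //.
  exact: nbhs_singleton.
- move=> k x; apply: Hinj; rewrite HactPhi !Hh; apply: funext => v.
  rewrite /L.
  have -> : phi (fun i => (k^-1 * x i)%g) (actV k^-1%g v) = (fun g => phi x v (k^-1^-1 * g)%g).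
    apply: funext => g; rewrite invgK /phi.
    rewrite -[in RHS](Hfinv k) HactPhi (gcons_map1 (fun a => (k^-1 * a)%g)) /= mulKg //.
  by rewrite Hmi.
- apply: funext => y; apply: Hinj; apply: funext => v.
  have coc : forall g, \sum_(i < m.+2) ((-1) ^+ i : K) *: f (gcons g (fun j => y (lift i j))) = f y.
    move=> g; have := congr1 (fun F => F (gcons g y)) Hcoc.
    rewrite /coboundary /= big_ord_recl expr0 scale1r gcons_lift0.
    move=> H.
    rewrite (eq_bigr (fun i : 'I_m.+2 => - (((-1) ^+ i : K) *: f (gcons g (fun j => y (lift i j)))))) in H; last first.
      by move=> i _; rewrite gcons_liftS lift0 exprS mulN1r scaleNr.
    move: H; rewrite sumrN => /eqP; rewrite addr_eq0 opprK => /eqP ->; done.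
  rewrite /coboundary (Phisum Hlin).
  under eq_bigr do rewrite Hh.
  rewrite /L.
  have [_ <-] := @mm_sum _ _ _ _ _ Ha Hm m.+2 (fun i : 'I_m.+2 => ((-1) ^+ i : K))
     (fun i => phi (fun j => y (lift i j)) v) (fun i => Cbphi _ v).
  have -> : (fun g => \sum_(i < m.+2) ((-1) ^+ i : K) * phi (fun j => y (lift i j)) v g) = (fun _ => Phi (f y) v).
    apply: funext => g; rewrite /phi -(Phisum Hlin) coc //.
  exact: (mconst Ha Hm H1).
Qed.

Theorem theorem7p4 (R : realType) (K : fieldType) (absK : K -> R)
    (G : topGroupType) (E : lmodType K) (nE : E -> R) (actE : G -> E -> E) :
  nonarch_abs absK ->
  topological_group G ->
  totally_disconnected [set: G] ->
  locally_compact [set: G] ->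
  normed_amenable absK G ->
  normed_module absK nE actE ->
  dual_normed_module absK nE actE ->
  forall n : nat, (1 <= n)%N ->
    Hlucb_succ_vanishes nE actE n.-1.
Proof.
move=> Ha Htop _ _ Hamen HnE Hdual n _.
exact: (@main R K absK G E nE actE n.-1 Ha Htop Hamen HnE Hdual).
Qed.
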